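(* Let $G$ be a digraph, let $X\subseteq V(G)$, let $r\ge1$ and let $c=\mathrm{wcol}_r(G)$. Then the number of distinct distance-$r$ vectors $D_r^-(v,X)$, $v\in V(G)$, is bounded by $((r+2)\cdot c\cdot|X|)^c$, and in particular $\nu_r^-(G,X)\le((r+2)\cdot c\cdot|X|)^c$.
   Context: For a linear order $L$ of $V(G)$, $u$ is weakly $r$-reachable from $v$ if there is a directed path of length at most $r$ from $u$ to $v$ or from $v$ to $u$ on which $u$ is the $L$-minimum; $\mathrm{WReach}_r[G,L,v]$ is the set of such $u$; $\mathrm{wcol}_r(G)=\min_L\max_{v}|\mathrm{WReach}_r[G,L,v]|$. For $A=\{a_1,\dots,a_{|A|}\}\subseteq V(G)$ (with a fixed enumeration) and $v\in V(G)$, the distance-$r$ vector $D_r^-(v,A)=(d_1,\dots,d_{|A|})$ has $d_i=\mathrm{dist}(a_i,v)$ (length of a shortest directed path from $a_i$ to $v$) if this is at most $r$, and $d_i=\infty$ otherwise. $N_r^-(v)$ is the set of vertices from which $v$ is reachable by a directed path of length at most $r$, and $\nu_r^-(G,X)=|\{N_r^-(v)\cap X : v\in V(G)\}|$. *)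

(* Defs.v *)
(* A digraph is a finite type T of vertices with an arbitrary
   edge relation e : rel T (e x y = there is an arc x -> y). *)
From mathcomp Require Import all_boot.
Set Implicit Arguments. Unset Strict Implicit. Unset Printing Implicit Defensive.

Section Digraph.
Variables (T : finType) (e : rel T).

Fixpoint walk (k : nat) (x y : T) : bool :=
  match k with
  | 0 => x == y
  | k'.+1 => [exists w, e x w && walk k' w y]
  end.

Fixpoint cwalk (P : pred T) (k : nat) (x y : T) : bool :=
  match k with
  | 0 => (x == y) && P x
  | k'.+1 => P x && [exists w, e x w && cwalk P k' w y]
  end.

(* A linear order on V(G) is given by an injective rank function L : T -> nat,
   u <_L w iff L u < L w. *)
Definition WReach (r : nat) (L : T -> nat) (v : T) : {set T} :=
  [set u | [exists k : 'I_r.+1,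
     cwalk (fun w => L u <= L w) k u v || cwalk (fun w => L u <= L w) k v u]].

Definition wcol (r : nat) : nat :=
  \big[minn/#|T|]_(L : {ffun T -> 'I_#|T|} | injectiveb L)
     \max_(v : T) #|WReach r (fun x => nat_of_ord (L x)) v|.

(* dist(a,v) if at most r, None (= infinity) otherwise *)
Definition distr (r : nat) (a v : T) : option nat :=
  let k := find (fun k => walk k a v) (iota 0 r.+1) in
  if k <= r then Some k else None.

Definition Dvec (r : nat) (X : {set T}) (v : T) : seq (option nat) :=
  [seq distr r a v | a <- enum X].

Definition num_Dvec (r : nat) (X : {set T}) : nat :=
  size (undup [seq Dvec r X v | v <- enum T]).

Definition Nin (r : nat) (v : T) : {set T} :=
  [set u | [exists k : 'I_r.+1, walk k u v]].

Definition nu (r : nat) (X : {set T}) : nat :=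
  #|[set Nin r v :&: X | v : T]|.

End Digraph.

(* Main.v *)
Require Import Defs.
From mathcomp Require Import all_boot.
From mathcomp Require Import zify.
Set Implicit Arguments. Unset Strict Implicit. Unset Printing Implicit Defensive.

Lemma walk_cat (T : finType) (e : rel T) m n x y z :
  walk e m x y -> walk e n y z -> walk e (m + n) x z.
Proof.
elim: m x => [|m IH] x /=; first by move/eqP->.
case/existsP=> w /andP [exw wy] yz; apply/existsP; exists w.
by rewrite exw (IH _ wy yz).
Qed.

Lemma cwalk_walk (T : finType) (e : rel T) P k x y :
  cwalk e P k x y -> walk e k x y.
Proof.
elim: k x => [|k IH] x /=; first by case/andP.
case/andP=> _ /existsP [w /andP [exw wy]]; apply/existsP; exists w.
by rewrite exw (IH _ wy).
Qed.

Lemma cwalk_mono (T : finType) (e : rel T) (P Q : pred T) k x y :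
  (forall z, P z -> Q z) -> cwalk e P k x y -> cwalk e Q k x y.
Proof.
move=> PQ; elim: k x => [|k IH] x /=; first by case/andP=> -> /PQ ->.
case/andP=> /PQ -> /existsP [w /andP [exw wy]]; apply/existsP; exists w.
by rewrite exw (IH _ wy).
Qed.

Lemma cwalk_cat (T : finType) (e : rel T) P m n x y z :
  cwalk e P m x y -> cwalk e P n y z -> cwalk e P (m + n) x z.
Proof.
elim: m x => [|m IH] x /=; first by case/andP=> /eqP->.
case/andP=> Px /existsP [w /andP [exw wy]] yz; rewrite Px; apply/existsP; exists w.
by rewrite exw (IH _ wy yz).
Qed.

Lemma split_min (T : finType) (e : rel T) (L : T -> nat) d a v :
  walk e d a v -> exists m d1 d2, [/\ d1 + d2 = d,
    cwalk e (fun x => L m <= L x) d1 a m & cwalk e (fun x => L m <= L x) d2 m v].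
Proof.
elim: d a => [|d IH] a /=.
  by move/eqP->; exists v, 0, 0; rewrite /= eqxx leqnn.
case/existsP=> w /andP [exw wv].
have [m [d1 [d2 [Hd H1 H2]]]] := IH _ wv.
case: (leqP (L a) (L m)) => Ham.
  exists a, 0, d.+1; split => //=; first by rewrite eqxx leqnn.
  rewrite leqnn /=; apply/existsP; exists w; rewrite exw /= -Hd.
  apply: (@cwalk_mono _ _ (fun x => L m <= L x)); last exact: (cwalk_cat H1 H2).
  move=> z; exact: leq_trans.
exists m, d1.+1, d2; split; first by rewrite addSn Hd.
  rewrite /= (ltnW Ham) /=; apply/existsP; exists w; by rewrite exw.
exact: H2.
Qed.

Lemma find_le (P : pred nat) n j : j < n -> P j -> find P (iota 0 n) <= j.
Proof.
move=> jn Pj; rewrite leqNgt; apply/negP => H.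
have := before_find 0 H; by rewrite nth_iota // add0n Pj.
Qed.

Lemma find_P (P : pred nat) n : find P (iota 0 n) < n -> P (find P (iota 0 n)).
Proof.
move=> H.
have : has P (iota 0 n) by rewrite has_find size_iota.
move/(nth_find 0); by rewrite nth_iota // add0n.
Qed.

Lemma find_iota_le (P : pred nat) n : find P (iota 0 n) <= n.
Proof. by rewrite -{2}(size_iota 0 n) find_size. Qed.

Lemma find_iota_eq1 (P Q : pred nat) n :
  (forall k, k < n -> (exists2 j, j <= k & P j) -> (exists2 j, j <= k & Q j)) ->
  find Q (iota 0 n) <= find P (iota 0 n).
Proof.
move=> H; rewrite leqNgt; apply/negP => lt.
have pn : find P (iota 0 n) < n by apply: leq_trans lt (find_iota_le _ _).
have [j jk Qj] : exists2 j, j <= find P (iota 0 n) & Q j.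
  by apply: (H _ pn); exists (find P (iota 0 n)) => //; exact: find_P.
have : find Q (iota 0 n) <= j by apply: find_le => //; apply: leq_ltn_trans jk pn.
by rewrite leqNgt (leq_ltn_trans jk lt).
Qed.

Lemma find_iota_eq (P Q : pred nat) n :
  (forall k, k < n -> (exists2 j, j <= k & P j) <-> (exists2 j, j <= k & Q j)) ->
  find P (iota 0 n) = find Q (iota 0 n).
Proof.
move=> H; apply/eqP; rewrite eqn_leq !find_iota_eq1 // => k kn; by case: (H k kn).
Qed.

Lemma card_has_le (T : finType) (F : T -> {set T}) c (s : seq T) :
  (forall a, #|F a| <= c) -> #|[set w | has (fun a => w \in F a) s]| <= size s * c.
Proof.
move=> Fc; elim: s => [|a s IH].
  by rewrite (_ : [set w | _] = set0) ?cards0 //; apply/setP => w; rewrite !inE.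
rewrite (_ : [set w | _] = F a :|: [set w | has (fun a => w \in F a) s]); last first.
  by apply/setP => w; rewrite !inE.
apply: leq_trans (leq_card_setU _ _).1 _.
by rewrite /= mulSn leq_add.
Qed.

Lemma Dvec_bound (T : finType) (e : rel T) (X : {set T}) (r : nat) (L : T -> nat) c :
  (forall v, #|WReach e r L v| <= c) -> X != set0 ->
  num_Dvec e r X <= ((r + 2) * c * #|X|) ^ c.
Proof.
move=> Wc /set0Pn [x0 Hx0].
have c1 : 0 < c.
  apply: leq_trans (Wc x0); apply/card_gt0P; exists x0; rewrite inE.
  apply/existsP; exists ord0; by rewrite /= eqxx leqnn.
pose Y := [set w | [exists a in X, w \in WReach e r L a]].
pose W v := [set w in Y | [exists k : 'I_r.+1, cwalk e (fun x => L w <= L x) k w v]].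
have cW v : #|W v| <= c.
  apply: leq_trans (Wc v); apply: subset_leq_card; apply/subsetP => w.
  rewrite !inE => /andP [_ /existsP [k Hk]]; apply/existsP; exists k; by rewrite Hk.
pose dst w v := find (fun k => walk e k w v) (iota 0 r.+1).
have dstW v w : w \in W v -> dst w v <= r /\ walk e (dst w v) w v.
  rewrite inE => /andP [_ /existsP [k /cwalk_walk Hk]].
  have dk : dst w v <= k by apply: (@find_le (fun k => walk e k w v)).
  have dr : dst w v <= r by apply: leq_trans dk (leq_ord k).
  split => //; apply: (@find_P (fun k => walk e k w v)); by rewrite ltnS.
pose g v w := (w, (inord (dst w v) : 'I_r.+1)).
pose fv v := [ffun j : 'I_c => nth None [seq Some (g v w) | w <- enum (W v)] j].
have fvS v j p : fv v j = Some p -> exists2 w, w \in W v & p = g v w.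
  rewrite ffunE => H.
  have : Some p \in [seq Some (g v w) | w <- enum (W v)].
    rewrite -H mem_nth //; rewrite ltnNge; apply/negP => /(nth_default None).
    by rewrite H.
  case/mapP => w; rewrite mem_enum => wW [->]; by exists w.
pose Q (f : {ffun 'I_c -> option (T * 'I_r.+1)}) a k :=
  [exists j, if f j is Some p then
     [exists d : 'I_r.+1, (d + p.2 <= k) && walk e d a p.1] else false].
pose G (f : {ffun 'I_c -> option (T * 'I_r.+1)}) :=
  [seq (let k := find (Q f a) (iota 0 r.+1) in if k <= r then Some k else None)
  | a <- enum X].
pose A := [set o : option (T * 'I_r.+1) | if o is Some p then p.1 \in Y else true].
have key v : Dvec e r X v = G (fv v).
  rewrite /Dvec /G. apply/eq_in_map => a; rewrite mem_enum => aX.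
  rewrite /distr (_ : find _ (iota 0 r.+1) = find (Q (fv v) a) (iota 0 r.+1)) //.
  apply: find_iota_eq => k kr; split.
    case=> j jk wj.
    have [m [d1 [d2 [Hd H1 H2]]]] := split_min L wj.
    have jr : j <= r by apply: leq_trans jk _; rewrite -ltnS.
    have mY : m \in Y.
      rewrite inE; apply/existsP; exists a; rewrite aX inE /=; apply/existsP.
      exists (inord d1); rewrite inordK ?H1 ?orbT //; lia.
    have mW : m \in W v.
      rewrite inE mY /=; apply/existsP; exists (inord d2); rewrite inordK //; lia.
    have [dr dw] := dstW _ _ mW.
    have dd2 : dst m v <= d2.
      apply: (@find_le (fun k => walk e k m v)); [lia | exact: cwalk_walk H2].
    exists k => //; apply/existsP.
    have jc : index m (enum (W v)) < c.
      by apply: leq_trans (cW v); rewrite cardE index_mem mem_enum.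
    exists (Ordinal jc); rewrite ffunE /= (nth_map m) ?index_mem ?mem_enum //.
    rewrite nth_index ?mem_enum //=.
    apply/existsP; exists (inord d1); rewrite inordK; last lia.
    rewrite (cwalk_walk H1) andbT /= inordK; lia.
  case=> j jk /existsP [j0].
  case E: (fv v j0) => [p|] //; case/existsP => d /andP [dle wd].
  have [w wW pg] := fvS _ _ _ E; subst p; simpl in dle, wd.
  have [dr dw] := dstW _ _ wW.
  rewrite inordK in dle; last lia.
  exists (d + dst w v); [lia | exact: walk_cat wd dw].
have inA v : fv v \in ffun_on A.
  apply/ffun_onP => j; rewrite inE; case E: (fv v j) => [p|] //.
  have [w wW ->] := fvS _ _ _ E; rewrite /=; move: wW; by rewrite inE => /andP [].
rewrite /num_Dvec.
apply: (@leq_trans (size [seq G f | f <- enum (ffun_on A)])).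
  apply: uniq_leq_size; first exact: undup_uniq.
  move=> s; rewrite mem_undup => /mapP [v _ ->]; rewrite key; apply: map_f.
  rewrite mem_enum; exact: inA.
rewrite size_map -cardE card_ffun_on card_ord leq_exp2r //.
have cY : #|Y| <= #|X| * c.
  rewrite (_ : Y = [set w | has (fun a => w \in WReach e r L a) (enum X)]); last first.
    apply/setP => w; rewrite !inE; apply/existsP/hasP => [[a /andP [aX wa]] | [a aX wa]];
      exists a; rewrite ?mem_enum in aX *; by rewrite ?aX.
  apply: leq_trans (@card_has_le _ (WReach e r L) c (enum X) Wc) _; by rewrite cardE.
have cA : #|A| <= 1 + #|Y| * r.+1.
  apply: leq_trans (subset_leq_card (_ : A \subset None |: (Some @: setX Y [set: 'I_r.+1]))) _.
    apply/subsetP => -[[w i]|]; rewrite !inE //= => wY.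
    apply/imsetP; exists (w, i) => //; by rewrite in_setX !inE wY.
  rewrite cardsU1; apply: leq_add; first by case: (None \notin _).
  apply: leq_trans (leq_imset_card _ _) _; by rewrite cardsX cardsT card_ord.
have X1 : 0 < #|X| by apply/card_gt0P; exists x0.
apply: leq_trans cA _.
have h1 := leq_mul cY (leqnn r.+1).
have h2 : 0 < #|X| * c by rewrite muln_gt0 X1.
nia.
Qed.

Lemma nu_le (T : finType) (e : rel T) (X : {set T}) (r : nat) :
  nu e r X <= num_Dvec e r X.
Proof.
pose H (s : seq (option nat)) :=
  [set a in X | nth None s (index a (enum X)) != None].
pose s := undup [seq Dvec e r X v | v <- enum T].
rewrite /nu /num_Dvec -/s.
apply: (@leq_trans #|[set S | S \in [seq H x | x <- s]]|).
  apply: subset_leq_card; apply/subsetP => S /imsetP [v _ ->]; rewrite inE.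
  apply/mapP; exists (Dvec e r X v); first by rewrite mem_undup map_f ?mem_enum.
  apply/setP => a; rewrite !inE; case aX: (a \in X); rewrite ?andbF //=.
  rewrite /Dvec (nth_map a) ?index_mem ?mem_enum // nth_index ?mem_enum //.
  rewrite andbT /distr; case: ifP => fr /=.
    apply/existsP; exists (Ordinal (fr : _ < r.+1)).
    apply: (@find_P (fun k => walk e k a v)); by rewrite ltnS.
  apply/negbTE/negP => /existsP [k wk].
  have : find (fun k => walk e k a v) (iota 0 r.+1) <= k.
    exact: (@find_le (fun k => walk e k a v)).
  move: (ltn_ord k); rewrite ltnS => kr le; by rewrite (leq_trans le kr) in fr.
by rewrite cardsE (leq_trans (card_size _)) // size_map.
Qed.

Theorem mainTheorem14 (T : finType) (e : rel T) (X : {set T}) (r : nat) :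
  X != set0 -> 1 <= r ->
  let c := wcol e r in
  num_Dvec e r X <= ((r + 2) * c * #|X|) ^ c /\
  nu e r X <= ((r + 2) * c * #|X|) ^ c.
Proof.
move=> X0 r1 c.
pose F (L : {ffun T -> 'I_#|T|}) :=
  \max_(v : T) #|WReach e r (fun x => nat_of_ord (L x)) v|.
have FT L : F L <= #|T| by apply/bigmax_leqP => v _; exact: max_card.
have [L LF] : exists L, F L <= c.
  have : c = #|T| \/ exists2 L : {ffun T -> 'I_#|T|}, injectiveb L & c = F L.
    rewrite /c /wcol; apply: (big_ind (fun n => n = #|T| \/ exists2 L : {ffun T -> 'I_#|T|}, injectiveb L & n = F L)).
    - by left.
    - move=> x y Hx Hy; rewrite /minn; by case: ifP.
    - move=> L HL; right; by exists L.
  case=> [-> | [L _ ->]]; last by exists L.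
  by exists [ffun x => enum_rank x].
have Wc v : #|WReach e r (fun x => nat_of_ord (L x)) v| <= c.
  apply: leq_trans LF; rewrite /F; exact: (@leq_bigmax T (fun v => #|WReach e r (fun x => nat_of_ord (L x)) v|) v).
have B := Dvec_bound Wc X0.
split => //; exact: leq_trans (nu_le _ _ _) B.
Qed.
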